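(* Let $p\in(0,1)$, $\gamma>0$, $B>0$, $w,N\in\mathbb{N}$, and let $(\xi_j^{(N)*})_{j=1}^N$ be the unique maximizer of $\mathcal{T}_N$. Then $\xi_j^{(N)*}>0$ for all $j\in\{1,\dots,N\}$ and $\xi_1^{(N)*}>\xi_2^{(N)*}>\dots>\xi_N^{(N)*}$.
   Context: Logarithms are base 2. For an admissible (nonnegative, with sum at most $B$) sequence $(x_j)_{j\ge1}$, $$\mathcal{T}_\infty(x_1,x_2,\dots)=\sum_{k=1}^{w}p^2(1-p)^{k-1}\frac{k}{2}\log_2\!\Big(1+\gamma\frac{B}{k}\Big)+\sum_{j=1}^{\infty}p(1-p)^{j+w-1}\frac12\log_2(1+\gamma x_j)+\sum_{k=1}^{\infty}p^2(1-p)^{k+w-1}\frac{w}{2}\log_2\!\Big(1+\gamma\frac{B-\sum_{j=1}^{k}x_j}{w}\Big).$$ For $N\in\mathbb{N}$ and $\xi_1,\dots,\xi_N\ge0$ with $\sum_{j=1}^N\xi_j\le B$, define $\mathcal{T}_N(\xi_1,\dots,\xi_N)=\mathcal{T}_\infty(\xi_1,\dots,\xi_N,0,0,\dots)$. $\mathcal{T}_N$ has a unique maximizer over this compact set, denoted $(\xi_j^{(N)*})_{j=1}^N$. *)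

(* Defs.v *)
From Stdlib Require Import Reals Lra Lia.
From Coquelicot Require Import Coquelicot.
Open Scope R_scope.

Definition log2 (x : R) : R := ln x / ln 2.

(* psum x n = x_1 + ... + x_n  (sequences are indexed from 1; x 0 is unused) *)
Fixpoint psum (x : nat -> R) (n : nat) : R :=
  match n with
  | O => 0
  | S m => psum x m + x (S m)
  end.

Definition T_inf (p gamma B : R) (w : nat) (x : nat -> R) : R :=
  psum (fun k => p ^ 2 * (1 - p) ^ (k - 1) * (INR k / 2)
                 * log2 (1 + gamma * (B / INR k))) w
  (* sum_{j>=1} p (1-p)^{j+w-1} 1/2 log2(1 + gamma x_j) ; j = n+1 *)
  + Series (fun n => p * (1 - p) ^ (n + w) * (1 / 2)
                     * log2 (1 + gamma * x (S n)))
  + Series (fun n => p ^ 2 * (1 - p) ^ (n + w) * (INR w / 2)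
                     * log2 (1 + gamma * ((B - psum x (S n)) / INR w))).

Definition padN (N : nat) (xi : nat -> R) : nat -> R :=
  fun j => if (Nat.leb 1 j && Nat.leb j N)%bool then xi j else 0.

Definition T_N (p gamma B : R) (w N : nat) (xi : nat -> R) : R :=
  T_inf p gamma B w (padN N xi).

Definition admissibleN (B : R) (N : nat) (xi : nat -> R) : Prop :=
  (forall j, (1 <= j <= N)%nat -> 0 <= xi j) /\ psum xi N <= B.

Definition is_maximizerN (p gamma B : R) (w N : nat) (xi : nat -> R) : Prop :=
  admissibleN B N xi /\
  forall eta, admissibleN B N eta -> T_N p gamma B w N eta <= T_N p gamma B w N xi.

(* Main.v *)
Require Import Defs.
From Stdlib Require Import Reals Lra Lia FunctionalExtensionality.
From Coquelicot Require Import Coquelicot.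
Open Scope R_scope.

Lemma ln2_pos : 0 < ln 2. Proof. rewrite <- ln_1. apply ln_increasing; lra. Qed.

Fixpoint fsum (a : nat -> R) (M : nat) : R :=
  match M with O => 0 | S m => fsum a m + a m end.

Lemma fsum_shift a M : fsum a (S M) = a O + fsum (fun k => a (S k)) M.
Proof. induction M; [simpl; lra|]. change (fsum a (S (S M))) with (fsum a (S M) + a (S M)). rewrite IHM. simpl. lra. Qed.

Lemma geo_tail : forall M a c q, 0 <= q < 1 ->
  (forall n, (M <= n)%nat -> a n = c * q ^ n) ->
  is_series a (fsum a M + c * q ^ M / (1 - q)).
Proof.
  induction M; intros a c q Hq Ha.
  - simpl. apply is_series_ext with (fun n => (q ^ n) * c).
    { intro n. rewrite Ha by lia. apply Rmult_comm. }
    replace (0 + c * 1 / (1 - q)) with ((/ (1 - q)) * c) by (field; lra).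
    apply is_series_scal_r. apply is_series_geom. rewrite Rabs_right; lra.
  - apply is_series_decr_1.
    match goal with |- is_series _ ?l => replace l
      with (fsum (fun k => a (S k)) M + (c * q) * q ^ M / (1 - q));
      [apply IHM; auto; intros n Hn; rewrite Ha by lia; simpl; ring
      | rewrite fsum_shift; unfold plus, opp; simpl; field; lra] end.
Qed.

Lemma fsum_minus a b M : fsum (fun n => a n - b n) M = fsum a M - fsum b M.
Proof. induction M; simpl; lra. Qed.

Lemma fsum_ext a b M : (forall n, (n < M)%nat -> a n = b n) -> fsum a M = fsum b M.
Proof. induction M; intros H; simpl; auto. rewrite IHM by (intros; apply H; lia). rewrite H by lia. auto. Qed.

Lemma fsum_sparse D m M : (forall n, n <> m -> n <> S m -> D n = 0) ->
  fsum D M = (if Nat.ltb m M then D m else 0) + (if Nat.ltb (S m) M then D (S m) else 0).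
Proof.
  intro H. induction M; simpl; [lra|]. rewrite IHM.
  destruct (Nat.eq_dec M m) as [E|E]; [subst M|destruct (Nat.eq_dec M (S m)) as [E'|E']; [subst M|]].
  - destruct (Nat.ltb_spec m m), (Nat.ltb_spec m (S m)), (Nat.ltb_spec (S m) m), (Nat.ltb_spec (S m) (S m)); try lia. lra.
  - destruct (Nat.ltb_spec m (S m)), (Nat.ltb_spec m (S (S m))), (Nat.ltb_spec (S m) (S m)), (Nat.ltb_spec (S m) (S (S m))); try lia. lra.
  - rewrite (H M E E').
    destruct (Nat.ltb_spec m M), (Nat.ltb_spec m (S M)), (Nat.ltb_spec (S m) M), (Nat.ltb_spec (S m) (S M)); try lia; lra.
Qed.

Lemma psum_ind x j c n : (1 <= j)%nat ->
  psum (fun k => x k + (if Nat.eqb k j then c else 0)) n = psum x n + (if Nat.leb j n then c else 0).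
Proof.
  intro Hj. induction n; cbn [psum].
  - destruct (Nat.leb_spec j 0); [lia|lra].
  - rewrite IHn. destruct (Nat.eqb_spec (S n) j), (Nat.leb_spec j n), (Nat.leb_spec j (S n)); try lia; lra.
Qed.

Lemma psum_ext x y n : (forall k, (1 <= k <= n)%nat -> x k = y k) -> psum x n = psum y n.
Proof. induction n; intro H; simpl; auto. rewrite IHn by (intros; apply H; lia). rewrite H by lia. auto. Qed.

Lemma psum_mono x m n : (forall k, 0 <= x k) -> (m <= n)%nat -> psum x m <= psum x n.
Proof. intros H Hmn. induction Hmn; simpl; [lra|]. specialize (H (S m0)). lra. Qed.

Lemma psum_const x N n : (forall k, (N < k)%nat -> x k = 0) -> (N <= n)%nat -> psum x n = psum x N.
Proof. intros H Hn. induction Hn; simpl; auto. rewrite H by lia. lra. Qed.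
Definition Us p gamma (w : nat) (x : nat -> R) n := p * (1 - p) ^ (n + w) * (1 / 2) * log2 (1 + gamma * x (S n)).
Definition Vs p gamma B (w : nat) (x : nat -> R) n := p ^ 2 * (1 - p) ^ (n + w) * (INR w / 2)
                     * log2 (1 + gamma * ((B - psum x (S n)) / INR w)).

Lemma T_inf_eq p gamma B w x : T_inf p gamma B w x =
  psum (fun k => p ^ 2 * (1 - p) ^ (k - 1) * (INR k / 2)
                 * log2 (1 + gamma * (B / INR k))) w + Series (Us p gamma w x) + Series (Vs p gamma B w x).
Proof. reflexivity. Qed.

Lemma log2_1 : log2 1 = 0.
Proof. unfold log2. rewrite ln_1. unfold Rdiv. ring. Qed.

Lemma Us_series p gamma w N x : 0 < p < 1 -> (forall k, (N < k)%nat -> x k = 0) ->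
  is_series (Us p gamma w x) (fsum (Us p gamma w x) N).
Proof.
  intros Hp Hx. replace (fsum (Us p gamma w x) N) with (fsum (Us p gamma w x) N + 0 * (1-p)^N / (1 - (1-p))) by (field; lra).
  apply geo_tail; [lra|]. intros n Hn. unfold Us. rewrite Hx by lia.
  rewrite Rmult_0_r, Rplus_0_r, log2_1. ring.
Qed.

Lemma Vs_series p gamma B w N M x : 0 < p < 1 -> (forall k, (N < k)%nat -> x k = 0) -> (N <= S M)%nat ->
  is_series (Vs p gamma B w x) (fsum (Vs p gamma B w x) M +
     (p ^ 2 * (1 - p) ^ w * (INR w / 2) * log2 (1 + gamma * ((B - psum x N) / INR w))) * (1-p)^M / (1 - (1-p))).
Proof.
  intros Hp Hx HM. apply geo_tail; [lra|]. intros n Hn. unfold Vs.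
  rewrite (psum_const x N (S n)) by (auto; lia). rewrite pow_add. ring.
Qed.

Definition Gex p gamma (w : nat) a b u m h :=
  p*(1-p)^(m+w)*(1/2)*(log2(1+gamma*(a+h)) - log2(1+gamma*a))
  + p*(1-p)^(S m+w)*(1/2)*(log2(1+gamma*(b-h)) - log2(1+gamma*b))
  + p^2*(1-p)^(m+w)*(INR w/2)*(log2(1+gamma*((u-h)/INR w)) - log2(1+gamma*(u/INR w))).

Lemma exch_diff p gamma B w N x y m eps : 0 < p < 1 -> (forall k, (N < k)%nat -> x k = 0) ->
  (S (S m) <= N)%nat ->
  (forall k, y k = (x k + (if Nat.eqb k (S m) then eps else 0)) + (if Nat.eqb k (S (S m)) then -eps else 0)) ->
  T_inf p gamma B w y - T_inf p gamma B w x = Gex p gamma w (x (S m)) (x (S (S m))) (B - psum x (S m)) m eps.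
Proof.
  intros Hp Hx HN Hy.
  assert (Hy0 : forall k, (N < k)%nat -> y k = 0).
  { intros k Hk. rewrite Hy, Hx by lia. destruct (Nat.eqb_spec k (S m)), (Nat.eqb_spec k (S (S m))); lia || lra. }
  assert (Hps : forall n, psum y n = psum x n + (if Nat.leb (S m) n then eps else 0) + (if Nat.leb (S (S m)) n then -eps else 0)).
  { intro n. rewrite (psum_ext y (fun k => (fun k => x k + (if Nat.eqb k (S m) then eps else 0)) k + (if Nat.eqb k (S (S m)) then -eps else 0))) by (intros; apply Hy).
    rewrite psum_ind by lia. rewrite psum_ind by lia. reflexivity. }
  rewrite !T_inf_eq.
  rewrite (is_series_unique _ _ (Us_series p gamma w N x Hp Hx)).
  rewrite (is_series_unique _ _ (Us_series p gamma w N y Hp Hy0)).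
  rewrite (is_series_unique _ _ (Vs_series p gamma B w N N x Hp Hx ltac:(lia))).
  rewrite (is_series_unique _ _ (Vs_series p gamma B w N N y Hp Hy0 ltac:(lia))).
  rewrite (Hps N).
  destruct (Nat.leb_spec (S m) N), (Nat.leb_spec (S (S m)) N); try lia.
  replace (psum x N + eps + - eps) with (psum x N) by ring.
  assert (HU : fsum (Us p gamma w y) N - fsum (Us p gamma w x) N =
     p*(1-p)^(m+w)*(1/2)*(log2(1+gamma*(x (S m)+eps)) - log2(1+gamma*x (S m)))
     + p*(1-p)^(S m+w)*(1/2)*(log2(1+gamma*(x (S (S m))-eps)) - log2(1+gamma*x (S (S m))))).
  { rewrite <- fsum_minus. rewrite (fsum_sparse _ m).
    - destruct (Nat.ltb_spec m N), (Nat.ltb_spec (S m) N); try lia.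
      unfold Us. rewrite !Hy. rewrite !Nat.eqb_refl.
      destruct (Nat.eqb_spec (S m) (S (S m))); try lia.
      destruct (Nat.eqb_spec (S (S m)) (S m)); try lia. simpl (S m + w)%nat. ring_simplify. 
      replace (x (S (S m)) + 0 + - eps) with (x (S (S m)) - eps) by ring.
      replace (x (S m) + eps + 0) with (x (S m) + eps) by ring. ring.
    - intros n H1 H2. unfold Us. rewrite Hy.
      destruct (Nat.eqb_spec (S n) (S m)), (Nat.eqb_spec (S n) (S (S m))); try lia.
      rewrite !Rplus_0_r. ring. }
  assert (HV : fsum (Vs p gamma B w y) N - fsum (Vs p gamma B w x) N =
     p^2*(1-p)^(m+w)*(INR w/2)*(log2(1+gamma*(((B - psum x (S m))-eps)/INR w)) - log2(1+gamma*((B - psum x (S m))/INR w)))).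
  { rewrite <- fsum_minus. rewrite (fsum_sparse _ m).
    - destruct (Nat.ltb_spec m N), (Nat.ltb_spec (S m) N); try lia.
      unfold Vs. rewrite !Hps.
      destruct (Nat.leb_spec (S m) (S m)), (Nat.leb_spec (S (S m)) (S m)), (Nat.leb_spec (S m) (S (S m))), (Nat.leb_spec (S (S m)) (S (S m))); try lia.
      replace (B - (psum x (S m) + eps + 0)) with (B - psum x (S m) - eps) by ring.
      replace (B - (psum x (S (S m)) + eps + - eps)) with (B - psum x (S (S m))) by ring.
      ring.
    - intros n H1 H2. unfold Vs. rewrite Hps.
      destruct (Nat.leb_spec (S m) (S n)), (Nat.leb_spec (S (S m)) (S n)); try lia.
      + replace (psum x (S n) + eps + - eps) with (psum x (S n)) by ring. ring.
      + rewrite !Rplus_0_r. ring. }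
  unfold Gex. lra.
Qed.

Definition Gn p gamma (w : nat) a u m h :=
  p*(1-p)^(m+w)*(1/2)*(log2(1+gamma*(a+h)) - log2(1+gamma*a))
  + p*(1-p)^(m+w)*(INR w/2)*(log2(1+gamma*((u-h)/INR w)) - log2(1+gamma*(u/INR w))).

Lemma N_diff p gamma B w N x y m eps : 0 < p < 1 -> (forall k, (N < k)%nat -> x k = 0) ->
  N = S m ->
  (forall k, y k = x k + (if Nat.eqb k N then eps else 0)) ->
  T_inf p gamma B w y - T_inf p gamma B w x = Gn p gamma w (x N) (B - psum x N) m eps.
Proof.
  intros Hp Hx HN Hy.
  assert (Hy0 : forall k, (N < k)%nat -> y k = 0).
  { intros k Hk. rewrite Hy, Hx by lia. destruct (Nat.eqb_spec k N); lia || lra. }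
  assert (Hps : forall n, psum y n = psum x n + (if Nat.leb N n then eps else 0)).
  { intro n. rewrite (psum_ext y (fun k => x k + (if Nat.eqb k N then eps else 0))) by (intros; apply Hy).
    rewrite psum_ind by lia. reflexivity. }
  rewrite !T_inf_eq.
  rewrite (is_series_unique _ _ (Us_series p gamma w N x Hp Hx)).
  rewrite (is_series_unique _ _ (Us_series p gamma w N y Hp Hy0)).
  rewrite (is_series_unique _ _ (Vs_series p gamma B w N m x Hp Hx ltac:(lia))).
  rewrite (is_series_unique _ _ (Vs_series p gamma B w N m y Hp Hy0 ltac:(lia))).
  rewrite (Hps N). rewrite Nat.leb_refl.
  rewrite (fsum_ext (Vs p gamma B w y) (Vs p gamma B w x)).
  2:{ intros n Hn. unfold Vs. rewrite Hps. destruct (Nat.leb_spec N (S n)); try lia. rewrite Rplus_0_r. reflexivity. }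
  assert (HU : fsum (Us p gamma w y) N - fsum (Us p gamma w x) N =
     p*(1-p)^(m+w)*(1/2)*(log2(1+gamma*(x N+eps)) - log2(1+gamma*x N))).
  { rewrite <- fsum_minus. rewrite (fsum_sparse _ m).
    - destruct (Nat.ltb_spec m N), (Nat.ltb_spec (S m) N); try lia.
      unfold Us. rewrite !Hy. subst N. rewrite !Nat.eqb_refl. ring.
    - intros n H1 H2. unfold Us. rewrite Hy.
      destruct (Nat.eqb_spec (S n) N); try lia.
      rewrite !Rplus_0_r. ring. }
  unfold Gn. rewrite pow_add.
  replace (B - (psum x N + eps)) with (B - psum x N - eps) by ring.
  assert (1 - (1 - p) <> 0) by lra.
  rewrite pow_add in HU.
  assert (Ha: fsum (Us p gamma w y) N = fsum (Us p gamma w x) N + p*((1-p)^m*(1-p)^w)*(1/2)*(log2(1+gamma*(x N+eps)) - log2(1+gamma*x N))) by lra.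
  rewrite Ha. field. lra.
Qed.

Lemma Gex_deriv p gamma (w : nat) a b u m : (1 <= w)%nat -> 0 < 1 + gamma*a -> 0 < 1 + gamma*b -> 0 < 1 + gamma*(u/INR w) ->
  derivable_pt_lim (Gex p gamma w a b u m) 0
    (p*(1-p)^(m+w)*gamma/(2*ln 2) * (1/(1+gamma*a) - (1-p)/(1+gamma*b) - p/(1+gamma*(u/INR w)))).
Proof.
  intros Hw Ha Hb Hu. apply is_derive_Reals. unfold Gex, log2.
  pose proof ln2_pos. assert (0 < INR w) by (apply lt_0_INR; lia).
  assert (INR w + gamma * u = INR w * (1 + gamma * (u / INR w))) by (field; lra).
  assert (0 < INR w + gamma * u) by (rewrite H1; apply Rmult_lt_0_compat; lra).
  auto_derive.
  - rewrite Ropp_0, !Rplus_0_r. unfold Rdiv in *. auto.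
  - rewrite Ropp_0, !Rplus_0_r. simpl. field. unfold Rdiv in *. repeat split; lra.
Qed.

Lemma Gn_deriv p gamma (w : nat) a u m : (1 <= w)%nat -> 0 < 1 + gamma*a -> 0 < 1 + gamma*(u/INR w) ->
  derivable_pt_lim (Gn p gamma w a u m) 0
    (p*(1-p)^(m+w)*gamma/(2*ln 2) * (1/(1+gamma*a) - 1/(1+gamma*(u/INR w)))).
Proof.
  intros Hw Ha Hu. apply is_derive_Reals. unfold Gn, log2.
  pose proof ln2_pos. assert (0 < INR w) by (apply lt_0_INR; lia).
  assert (INR w + gamma * u = INR w * (1 + gamma * (u / INR w))) by (field; lra).
  assert (0 < INR w + gamma * u) by (rewrite H1; apply Rmult_lt_0_compat; lra).
  auto_derive.
  - rewrite Ropp_0, !Rplus_0_r. unfold Rdiv in *. auto.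
  - rewrite Ropp_0, !Rplus_0_r. simpl. field. unfold Rdiv in *. repeat split; lra.
Qed.

Lemma sign_pos f l d : derivable_pt_lim f 0 l -> f 0 = 0 -> 0 < l -> 0 < d ->
  exists h, 0 < h < d /\ 0 < f h.
Proof.
  intros Hf H0 Hl Hd. destruct (Hf (l/2) ltac:(lra)) as [del Hdel].
  pose proof (cond_pos del).
  set (h := Rmin del d / 2).
  assert (0 < h /\ h < del /\ h < d).
  { unfold h. pose proof (Rmin_l del d). pose proof (Rmin_r del d).
    assert (0 < Rmin del d) by (apply Rmin_glb_lt; lra). lra. }
  exists h. split; [lra|].
  specialize (Hdel h ltac:(lra) ltac:(rewrite Rabs_right; lra)).
  rewrite Rplus_0_l, H0, Rminus_0_r in Hdel.
  apply Rabs_def2 in Hdel.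
  replace (f h) with ((f h / h) * h) by (field; lra).
  apply Rmult_lt_0_compat; lra.
Qed.

Lemma sign_neg f l d : derivable_pt_lim f 0 l -> f 0 = 0 -> l < 0 -> 0 < d ->
  exists h, -d < h < 0 /\ 0 < f h.
Proof.
  intros Hf H0 Hl Hd. destruct (Hf (-l/2) ltac:(lra)) as [del Hdel].
  pose proof (cond_pos del).
  set (h := - (Rmin del d / 2)).
  assert (h < 0 /\ -h < del /\ -h < d).
  { unfold h. pose proof (Rmin_l del d). pose proof (Rmin_r del d).
    assert (0 < Rmin del d) by (apply Rmin_glb_lt; lra). lra. }
  exists h. split; [lra|].
  specialize (Hdel h ltac:(lra) ltac:(rewrite Rabs_left; lra)).
  rewrite Rplus_0_l, H0, Rminus_0_r in Hdel.
  apply Rabs_def2 in Hdel.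
  replace (f h) with (- (f h / h) * - h) by (field; lra).
  apply Rmult_lt_0_compat; lra.
Qed.

Definition OptX p gamma B w N (x : nat -> R) : Prop :=
  (forall k, 0 <= x k) /\ x O = 0 /\ (forall k, (N < k)%nat -> x k = 0) /\ psum x N <= B /\
  forall y, (forall k, 0 <= y k) -> y O = 0 -> (forall k, (N < k)%nat -> y k = 0) -> psum y N <= B ->
    T_inf p gamma B w y <= T_inf p gamma B w x.

Definition Fx gamma (x : nat -> R) k := 1 / (1 + gamma * x k).
Definition hx gamma B (w : nat) (x : nat -> R) k := 1 / (1 + gamma * ((B - psum x k) / INR w)).

Lemma den_ge1 gamma u W : 0 < gamma -> 0 <= u -> 0 < W -> 1 <= 1 + gamma * (u / W).
Proof. intros. assert (0 <= u / W) by (unfold Rdiv; apply Rmult_le_pos; [lra| apply Rlt_le, Rinv_0_lt_compat; lra]).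
  assert (0 <= gamma * (u/W)) by (apply Rmult_le_pos; lra). lra. Qed.

Lemma inv_le a b : 0 < a -> a <= b -> 1 / b <= 1 / a.
Proof. intros. unfold Rdiv. rewrite !Rmult_1_l. apply Rinv_le_contravar; lra. Qed.
Lemma inv_lt a b : 0 < a -> a < b -> 1 / b < 1 / a.
Proof. intros. unfold Rdiv. rewrite !Rmult_1_l. apply Rinv_lt_contravar; [apply Rmult_lt_0_compat|]; lra. Qed.

Lemma Gex0 p gamma w a b u m : Gex p gamma w a b u m 0 = 0.
Proof. unfold Gex. rewrite Rplus_0_r, !Rminus_0_r. ring. Qed.
Lemma Gn0 p gamma w a u m : Gn p gamma w a u m 0 = 0.
Proof. unfold Gn. rewrite Rplus_0_r, !Rminus_0_r. ring. Qed.

Lemma exch_opt p gamma B w N x m : 0 < p < 1 -> 0 < gamma -> (1 <= w)%nat -> (S (S m) <= N)%nat ->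
  OptX p gamma B w N x ->
  (0 < x (S (S m)) -> Fx gamma x (S m) - (1-p) * Fx gamma x (S (S m)) - p * hx gamma B w x (S m) <= 0) /\
  (0 < x (S m) -> 0 <= Fx gamma x (S m) - (1-p) * Fx gamma x (S (S m)) - p * hx gamma B w x (S m)).
Proof.
  intros Hp Hg Hw HN [Hx0 [Hx00 [Hxz [HxB Hmax]]]].
  assert (HW : 0 < INR w) by (apply lt_0_INR; lia).
  set (a := x (S m)). set (b := x (S (S m))). set (u := B - psum x (S m)).
  assert (Hu : 0 <= u). { unfold u. pose proof (psum_mono x (S m) N Hx0 ltac:(lia)). lra. }
  assert (Ha : 1 <= 1 + gamma * a) by (pose proof (Hx0 (S m)); fold a in H; nra).
  assert (Hb : 1 <= 1 + gamma * b) by (pose proof (Hx0 (S (S m))); fold b in H; nra).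
  pose proof (den_ge1 gamma u (INR w) Hg Hu HW) as Hu1.
  pose proof (Gex_deriv p gamma w a b u m Hw ltac:(lra) ltac:(lra) ltac:(lra)) as Hd.
  set (C := p * (1 - p) ^ (m + w) * gamma / (2 * ln 2)).
  assert (HC : 0 < C).
  { unfold C. pose proof ln2_pos. apply Rmult_lt_0_compat; [|apply Rinv_0_lt_compat; lra].
    apply Rmult_lt_0_compat; [|lra]. apply Rmult_lt_0_compat; [lra|]. apply pow_lt. lra. }
  set (E := Fx gamma x (S m) - (1-p) * Fx gamma x (S (S m)) - p * hx gamma B w x (S m)).
  assert (HE : 1 / (1 + gamma * a) - (1 - p) / (1 + gamma * b) - p / (1 + gamma * (u / INR w)) = E).
  { assert (INR w + gamma * u = INR w * (1 + gamma * (u / INR w))) by (field; lra).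
    assert (0 < INR w + gamma * u) by (rewrite H; apply Rmult_lt_0_compat; lra).
    unfold E, Fx, hx. fold a b u. field. repeat split; lra. }
  rewrite HE in Hd. fold C in Hd.
  assert (Hmk : forall h, 0 <= a + h -> 0 <= b - h ->
     T_inf p gamma B w (fun k => (x k + (if Nat.eqb k (S m) then h else 0)) + (if Nat.eqb k (S (S m)) then -h else 0))
     <= T_inf p gamma B w x).
  { intros h H1 H2. apply Hmax.
    - intro k. destruct (Nat.eqb_spec k (S m)), (Nat.eqb_spec k (S (S m))); subst; try lia.
      + fold a. lra.
      + fold b. lra.
      + pose proof (Hx0 k). lra.
    - simpl. rewrite Hx00. lra.
    - intros k Hk. rewrite Hxz by lia. destruct (Nat.eqb_spec k (S m)), (Nat.eqb_spec k (S (S m))); try lia. lra.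
    - rewrite psum_ind by lia. rewrite psum_ind by lia.
      destruct (Nat.leb_spec (S m) N), (Nat.leb_spec (S (S m)) N); try lia. lra. }
  split.
  - intros Hbp. destruct (Rle_or_lt E 0) as [|HE0]; auto. exfalso.
    destruct (sign_pos _ (C * E) b Hd (Gex0 _ _ _ _ _ _ _) ltac:(apply Rmult_lt_0_compat; lra) Hbp) as [h [Hh Hgh]].
    pose proof (exch_diff p gamma B w N x _ m h Hp Hxz HN (fun k => eq_refl)) as Ed. fold a b u in Ed.
    specialize (Hmk h ltac:(pose proof (Hx0 (S m)); fold a in H; lra) ltac:(lra)). lra.
  - intros Hap. destruct (Rle_or_lt 0 E) as [|HE0]; auto. exfalso.
    assert (C * E < 0) by (pose proof (Rmult_lt_compat_l C E 0 HC HE0); lra).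
    destruct (sign_neg _ (C * E) a Hd (Gex0 _ _ _ _ _ _ _) H Hap) as [h [Hh Hgh]].
    pose proof (exch_diff p gamma B w N x _ m h Hp Hxz HN (fun k => eq_refl)) as Ed. fold a b u in Ed.
    specialize (Hmk h ltac:(lra) ltac:(pose proof (Hx0 (S (S m))); fold b in H0; lra)). lra.
Qed.

Lemma N_opt p gamma B w N x m : 0 < p < 1 -> 0 < gamma -> (1 <= w)%nat -> N = S m ->
  OptX p gamma B w N x ->
  (0 < x N -> 0 <= Fx gamma x N - hx gamma B w x N) /\
  (psum x N < B -> Fx gamma x N - hx gamma B w x N <= 0).
Proof.
  intros Hp Hg Hw HN [Hx0 [Hx00 [Hxz [HxB Hmax]]]].
  assert (HW : 0 < INR w) by (apply lt_0_INR; lia).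
  set (a := x N). set (u := B - psum x N).
  assert (Hu : 0 <= u) by (unfold u; lra).
  assert (Ha : 1 <= 1 + gamma * a) by (pose proof (Hx0 N); fold a in H; nra).
  pose proof (den_ge1 gamma u (INR w) Hg Hu HW) as Hu1.
  pose proof (Gn_deriv p gamma w a u m Hw ltac:(lra) ltac:(lra)) as Hd.
  set (C := p * (1 - p) ^ (m + w) * gamma / (2 * ln 2)).
  assert (HC : 0 < C).
  { unfold C. pose proof ln2_pos. apply Rmult_lt_0_compat; [|apply Rinv_0_lt_compat; lra].
    apply Rmult_lt_0_compat; [|lra]. apply Rmult_lt_0_compat; [lra|]. apply pow_lt. lra. }
  set (E := Fx gamma x N - hx gamma B w x N).
  assert (HE : 1 / (1 + gamma * a) - 1 / (1 + gamma * (u / INR w)) = E) by (unfold E, Fx, hx; fold a u; reflexivity).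
  rewrite HE in Hd. fold C in Hd.
  assert (Hmk : forall h, 0 <= a + h -> h <= u ->
     T_inf p gamma B w (fun k => x k + (if Nat.eqb k N then h else 0)) <= T_inf p gamma B w x).
  { intros h H1 H2. apply Hmax.
    - intro k. destruct (Nat.eqb_spec k N); subst; try lia.
      + fold a. lra.
      + pose proof (Hx0 k). lra.
    - rewrite Hx00. destruct (Nat.eqb_spec 0 N); try lia. lra.
    - intros k Hk. rewrite Hxz by lia. destruct (Nat.eqb_spec k N); try lia. lra.
    - rewrite psum_ind by lia. rewrite Nat.leb_refl. unfold u in H2. lra. }
  split.
  - intros Hap. destruct (Rle_or_lt 0 E) as [|HE0]; auto. exfalso.
    assert (C * E < 0) by (pose proof (Rmult_lt_compat_l C E 0 HC HE0); lra).
    destruct (sign_neg _ (C * E) a Hd (Gn0 _ _ _ _ _ _) H Hap) as [h [Hh Hgh]].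
    pose proof (N_diff p gamma B w N x _ m h Hp Hxz HN (fun k => eq_refl)) as Ed. fold a u in Ed.
    specialize (Hmk h ltac:(lra) ltac:(lra)). lra.
  - intros Hlt. destruct (Rle_or_lt E 0) as [|HE0]; auto. exfalso.
    destruct (sign_pos _ (C * E) u Hd (Gn0 _ _ _ _ _ _) ltac:(apply Rmult_lt_0_compat; lra) ltac:(unfold u; lra)) as [h [Hh Hgh]].
    pose proof (N_diff p gamma B w N x _ m h Hp Hxz HN (fun k => eq_refl)) as Ed. fold a u in Ed.
    specialize (Hmk h ltac:(pose proof (Hx0 N); fold a in H; lra) ltac:(lra)). lra.
Qed.

Lemma Fx_facts gamma (x : nat -> R) k : 0 < gamma -> 0 <= x k ->
  0 < Fx gamma x k <= 1 /\ (0 < x k -> Fx gamma x k < 1) /\ (x k = 0 -> Fx gamma x k = 1).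
Proof.
  intros Hg Hx. unfold Fx. assert (0 <= gamma * x k) by (apply Rmult_le_pos; lra).
  split; [split|split].
  - apply Rdiv_lt_0_compat; lra.
  - eapply Rle_trans; [apply (inv_le 1); lra| right; field].
  - intro. eapply Rlt_le_trans; [apply (inv_lt 1); [lra|] | right; field]. assert (0 < gamma * x k) by (apply Rmult_lt_0_compat; lra). lra.
  - intro E. rewrite E. field.
Qed.

Lemma hx_mono gamma B w (x : nat -> R) j k : 0 < gamma -> (1 <= w)%nat -> psum x j <= psum x k <= B ->
  hx gamma B w x j <= hx gamma B w x k /\ (psum x j < psum x k -> hx gamma B w x j < hx gamma B w x k).
Proof.
  intros Hg Hw H. assert (HW : 0 < INR w) by (apply lt_0_INR; lia). unfold hx.
  pose proof (den_ge1 gamma (B - psum x k) (INR w) Hg ltac:(lra) HW).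
  split.
  - apply inv_le; [lra|]. apply Rplus_le_compat_l. apply Rmult_le_compat_l; [lra|].
    unfold Rdiv. apply Rmult_le_compat_r; [apply Rlt_le, Rinv_0_lt_compat; lra|lra].
  - intro. apply inv_lt; [lra|]. apply Rplus_lt_compat_l. apply Rmult_lt_compat_l; [lra|].
    unfold Rdiv. apply Rmult_lt_compat_r; [apply Rinv_0_lt_compat; lra|lra].
Qed.

Lemma hx_le1 gamma B w (x : nat -> R) k : 0 < gamma -> (1 <= w)%nat -> psum x k <= B ->
  0 < hx gamma B w x k <= 1 /\ (psum x k = B -> hx gamma B w x k = 1) /\ (psum x k < B -> hx gamma B w x k < 1).
Proof.
  intros Hg Hw H. assert (HW : 0 < INR w) by (apply lt_0_INR; lia). unfold hx.
  pose proof (den_ge1 gamma (B - psum x k) (INR w) Hg ltac:(lra) HW).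
  split; [split|split].
  - apply Rdiv_lt_0_compat; lra.
  - eapply Rle_trans; [apply (inv_le 1); lra| right; field].
  - intro E. rewrite E. unfold Rminus. rewrite Rplus_opp_r. field. lra.
  - intro. eapply Rlt_le_trans; [apply (inv_lt 1); [lra|] | right; field].
    assert (0 < (B - psum x k) / INR w) by (apply Rdiv_lt_0_compat; lra).
    assert (0 < gamma * ((B - psum x k) / INR w)) by (apply Rmult_lt_0_compat; lra). lra.
Qed.

Lemma L1 p gamma B w N x : 0 < p < 1 -> 0 < gamma -> (1 <= w)%nat -> (1 <= N)%nat ->
  OptX p gamma B w N x ->
  forall k, (k < N)%nat -> 0 < x (N - k)%nat -> hx gamma B w x (N - k) <= Fx gamma x (N - k).
Proof.
  intros Hp Hg Hw HN Hopt. pose proof Hopt as [Hx0 [Hx00 [Hxz [HxB Hmax]]]].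
  induction k; intros Hk Hpos.
  - destruct N as [|m]; [lia|]. replace (S m - 0)%nat with (S m) by lia.
    replace (S m - 0)%nat with (S m) in Hpos by lia.
    destruct (N_opt p gamma B w (S m) x m Hp Hg Hw eq_refl Hopt) as [H1 _]. specialize (H1 Hpos). lra.
  - destruct (N - S k)%nat as [|m] eqn:Ej; [lia|].
    assert (Ej' : (N - k)%nat = S (S m)) by lia.
    destruct (exch_opt p gamma B w N x m Hp Hg Hw ltac:(lia) Hopt) as [_ H2]. specialize (H2 Hpos).
    assert (Hps : psum x (S m) <= psum x (S (S m)) <= B).
    { split. apply psum_mono; auto. pose proof (psum_mono x (S (S m)) N Hx0 ltac:(lia)). lra. }
    destruct (hx_mono gamma B w x _ _ Hg Hw Hps) as [Hh _].
    assert (Hf : hx gamma B w x (S m) <= Fx gamma x (S (S m))).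
    { destruct (Fx_facts gamma x (S (S m)) Hg (Hx0 _)) as [_ [_ F0]].
      destruct (Rle_lt_or_eq_dec 0 (x (S (S m))) (Hx0 _)) as [Hl|Hl].
      - rewrite <- Ej' in Hl. specialize (IHk ltac:(lia) Hl). rewrite Ej' in IHk. lra.
      - rewrite F0 by auto. apply (hx_le1 gamma B w x (S m) Hg Hw). lra. }
    assert ((1-p) * hx gamma B w x (S m) <= (1-p) * Fx gamma x (S (S m))) by (apply Rmult_le_compat_l; lra).
    lra.
Qed.

Lemma P2 p gamma B w N x m : 0 < p < 1 -> 0 < gamma -> (1 <= w)%nat -> (S (S m) <= N)%nat ->
  OptX p gamma B w N x -> 0 < x (S (S m)) -> x (S (S m)) < x (S m).
Proof.
  intros Hp Hg Hw HN Hopt Hpos. pose proof Hopt as [Hx0 [Hx00 [Hxz [HxB Hmax]]]].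
  destruct (Rlt_or_le (x (S (S m))) (x (S m))) as [|Hle]; auto. exfalso.
  destruct (exch_opt p gamma B w N x m Hp Hg Hw HN Hopt) as [H1 _]. specialize (H1 Hpos).
  assert (HF : Fx gamma x (S (S m)) <= Fx gamma x (S m)).
  { unfold Fx. pose proof (Hx0 (S m)). apply inv_le; nra. }
  pose proof (L1 p gamma B w N x Hp Hg Hw ltac:(lia) Hopt (N - S (S m)) ltac:(lia)) as HL.
  replace (N - (N - S (S m)))%nat with (S (S m)) in HL by lia. specialize (HL Hpos).
  assert (Hps : psum x (S m) <= psum x (S (S m)) <= B).
  { split. apply psum_mono; auto. pose proof (psum_mono x (S (S m)) N Hx0 ltac:(lia)). lra. }
  destruct (hx_mono gamma B w x _ _ Hg Hw Hps) as [_ Hh].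
  assert (psum x (S m) < psum x (S (S m))) by (cbn [psum]; cbn [psum] in Hps; lra).
  specialize (Hh H).
  assert (0 < p * (Fx gamma x (S (S m)) - hx gamma B w x (S m))) by (apply Rmult_lt_0_compat; lra).
  lra.
Qed.

Lemma P1 p gamma B w N x : 0 < p < 1 -> 0 < gamma -> 0 < B -> (1 <= w)%nat -> (1 <= N)%nat ->
  OptX p gamma B w N x -> 0 < x N.
Proof.
  intros Hp Hg HB Hw HN Hopt. pose proof Hopt as [Hx0 [Hx00 [Hxz [HxB Hmax]]]].
  destruct (Rle_lt_or_eq_dec 0 (x N) (Hx0 N)) as [|HxN]; auto. exfalso. symmetry in HxN.
  destruct (Fx_facts gamma x N Hg (Hx0 N)) as [_ [_ F0]].
  destruct (Rle_lt_or_eq_dec _ _ HxB) as [Hlt|Heq].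
  - destruct N as [|m]; [lia|].
    destruct (N_opt p gamma B w (S m) x m Hp Hg Hw eq_refl Hopt) as [_ H2]. specialize (H2 Hlt).
    destruct (hx_le1 gamma B w x (S m) Hg Hw HxB) as [_ [_ H3]]. specialize (H3 Hlt).
    rewrite F0 in H2 by auto. lra.
  - assert (Hind : forall j, (1 <= j <= N)%nat -> x j = 0 -> psum x j = B -> False).
    { induction j; intros Hj Hx Hs; [lia|].
      destruct j as [|m].
      - cbn [psum] in Hs. rewrite Hx in Hs. lra.
      - assert (Hs' : psum x (S m) = B) by (cbn [psum] in Hs; cbn [psum]; lra).
        destruct (Rle_lt_or_eq_dec 0 (x (S m)) (Hx0 _)) as [Hpos|H0].
        + destruct (exch_opt p gamma B w N x m Hp Hg Hw ltac:(lia) Hopt) as [_ H2]. specialize (H2 Hpos).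
          destruct (Fx_facts gamma x (S (S m)) Hg (Hx0 _)) as [_ [_ F1]]. rewrite F1 in H2 by auto.
          destruct (Fx_facts gamma x (S m) Hg (Hx0 _)) as [_ [F2 _]]. specialize (F2 Hpos).
          destruct (hx_le1 gamma B w x (S m) Hg Hw ltac:(lra)) as [_ [H3 _]]. rewrite H3 in H2 by auto.
          lra.
        + apply IHj; auto. lia. }
    apply (Hind N); auto.
Qed.

Lemma padN_facts B N xi : admissibleN B N xi ->
  (forall k, 0 <= padN N xi k) /\ padN N xi O = 0 /\ (forall k, (N < k)%nat -> padN N xi k = 0) /\
  (forall k, (1 <= k <= N)%nat -> padN N xi k = xi k) /\ psum (padN N xi) N = psum xi N.
Proof.
  intros [H1 H2]. unfold padN.
  assert (E : forall k, (1 <= k <= N)%nat -> (if (Nat.leb 1 k && Nat.leb k N)%bool then xi k else 0) = xi k).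
  { intros k Hk. destruct (Nat.leb_spec 1 k), (Nat.leb_spec k N); simpl; try lia; auto. }
  split; [|split; [|split; [|split]]].
  - intro k. destruct (Nat.leb_spec 1 k), (Nat.leb_spec k N); simpl; try lra. apply H1; lia.
  - reflexivity.
  - intros k Hk. destruct (Nat.leb_spec 1 k), (Nat.leb_spec k N); simpl; try lia; lra.
  - exact E.
  - apply psum_ext. intros; apply E; lia.
Qed.

Lemma padN_id N (y : nat -> R) : y O = 0 -> (forall k, (N < k)%nat -> y k = 0) -> padN N y = y.
Proof.
  intros H0 H1. apply functional_extensionality. intro k. unfold padN.
  destruct (Nat.leb_spec 1 k), (Nat.leb_spec k N); simpl; auto.
  all: first [ rewrite H1 by lia; auto | replace k with O by lia; auto ].
Qed.

Theorem lemma5 (p gamma B : R) (w N : nat) (xi : nat -> R) :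
  0 < p < 1 -> 0 < gamma -> 0 < B -> (1 <= w)%nat -> (1 <= N)%nat ->
  is_maximizerN p gamma B w N xi ->
  (* xi is the unique maximizer (on the coordinates 1..N) *)
  (forall eta, is_maximizerN p gamma B w N eta ->
     forall j, (1 <= j <= N)%nat -> eta j = xi j) ->
  (forall j, (1 <= j <= N)%nat -> 0 < xi j) /\
  (forall j, (1 <= j < N)%nat -> xi (S j) < xi j).
Proof.
  intros Hp Hg HB Hw HN [Hadm Hmax] _.
  destruct (padN_facts B N xi Hadm) as [Hx0 [Hx00 [Hxz [Hxv Hps]]]].
  set (x := padN N xi) in *.
  assert (Hopt : OptX p gamma B w N x).
  { split; [auto|split; [auto|split; [auto|split]]].
    - rewrite Hps. apply Hadm.
    - intros y Hy0 Hy00 Hyz HyB.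
      assert (Ha : admissibleN B N y) by (split; auto).
      pose proof (Hmax y Ha) as Hle. unfold T_N in Hle. rewrite padN_id in Hle; auto. }
  assert (Hall : forall k, (k < N)%nat -> 0 < x (N - k)%nat).
  { induction k; intro Hk.
    - replace (N - 0)%nat with N by lia. apply (P1 p gamma B w N x); auto.
    - destruct (N - S k)%nat as [|m] eqn:Ej; [lia|].
      assert (Ej' : (N - k)%nat = S (S m)) by lia.
      specialize (IHk ltac:(lia)). rewrite Ej' in IHk.
      pose proof (P2 p gamma B w N x m Hp Hg Hw ltac:(lia) Hopt IHk). lra. }
  split.
  - intros j Hj. rewrite <- Hxv by auto. specialize (Hall (N - j)%nat ltac:(lia)).
    replace (N - (N - j))%nat with j in Hall by lia. auto.
  - intros j Hj. rewrite <- !Hxv by lia. destruct j as [|m]; [lia|].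
    apply (P2 p gamma B w N x m Hp Hg Hw ltac:(lia) Hopt).
    specialize (Hall (N - S (S m))%nat ltac:(lia)).
    replace (N - (N - S (S m)))%nat with (S (S m)) in Hall by lia. auto.
Qed.
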